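(* Let $F\leq F'\leq\hat F$ be permutation groups on $\Omega$. The closure of $G(F,F')$ in the topological group $\mathrm{Aut}(\mathcal{T}_d)$ (permutation topology) is $U(F')$. In particular, $G(F)$ is dense in $\mathrm{Aut}(\mathcal{T}_d)$ if and only if $F$ is transitive on $\Omega$.
   Context: Standing notation. $\Omega$ is a finite set with $d=|\Omega|\geq 3$, $\mathcal{T}_d$ is the $d$-regular tree with vertex set $V$ and set $E$ of non-oriented edges, and $\mathrm{Aut}(\mathcal{T}_d)$ carries the permutation topology (basis of identity neighbourhoods: pointwise stabilizers of finite vertex sets). Fix a coloring $c:E\to\Omega$ such that for every vertex $v$ its restriction $c_v$ to the set $E(v)$ of edges containing $v$ is a bijection onto $\Omega$. For $g\in\mathrm{Aut}(\mathcal{T}_d)$ and $v\in V$, the local permutation is $\sigma(g,v)=c_{gv}\circ g_v\circ c_v^{-1}\in\mathrm{Sym}(\Omega)$, where $g_v:E(v)\to E(gv)$ is induced by $g$. For $F\leq\mathrm{Sym}(\Omega)$: $U(F)=\{g:\sigma(g,v)\in F \ \forall v\}$; $G(F)=\{g:\sigma(g,v)\in F \text{ for all but finitely many } v\}$; $\hat F$ is the subgroup of permutations preserving each $F$-orbit. For $F\leq F'\leq\hat F$, $G(F,F')=G(F)\cap U(F')$. *)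

(* Defs.v *)
From HB Require Import structures.
From mathcomp Require Import all_boot all_order all_fingroup.
Set Implicit Arguments. Unset Strict Implicit. Unset Printing Implicit Defensive.

(** * The d-regular tree with a legal coloring, d = #|Omega|.
    Canonical model: vertices are the reduced words over Omega (no two
    consecutive letters equal).  The neighbour of w in colour a is w with its
    last letter removed if that letter is a, and w.a otherwise; the edge
    {w, nbr w a} has colour a.  This is a d-regular tree whose coloring c
    restricts to a bijection E(v) -> Omega at each vertex v. *)

Section Tree.
Variable Omega : finType.

Definition reduced (s : seq Omega) : bool := sorted (fun a b => a != b) s.

Definition vertex := {s : seq Omega | reduced s}.

Definition nbr_seq (s : seq Omega) (a : Omega) : seq Omega :=
  if s is x :: s' then
    (if last x s' == a then belast x s' else rcons s a)
  else [:: a].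

Lemma nbr_seq_reduced (v : vertex) (a : Omega) : reduced (nbr_seq (val v) a).
Proof.
case: v => [[|x s] /= Hs]; first by [].
case: eqP => Hl.
- have H2 : sorted (fun a b : Omega => a != b) (rcons (belast x s) (last x s))
    by rewrite -lastI.
  move: H2; rewrite /reduced.
  case: (belast x s) => [|y t] //=.
  by rewrite rcons_path => /andP [].
- by rewrite /reduced /= rcons_path Hs /=; apply/eqP.
Qed.

Definition nbr (v : vertex) (a : Omega) : vertex :=
  exist _ (nbr_seq (val v) a) (nbr_seq_reduced v a).

Definition adj (u w : vertex) : Prop := exists a, w = nbr u a.

Definition is_aut (g : vertex -> vertex) : Prop :=
  bijective g /\ forall u w, adj u w <-> adj (g u) (g w).

(** [local_in g v F] : the local permutation sigma(g,v) = c_{gv} o g_v o c_v^{-1}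
    belongs to F, i.e. g maps the edge of colour a at v to the edge of colour
    p a at g v, for some p in F. *)
Definition local_in (g : vertex -> vertex) (v : vertex) (F : {set {perm Omega}}) : Prop :=
  exists2 p : {perm Omega}, p \in F & forall a, g (nbr v a) = nbr (g v) (p a).

Definition U_ (F : {set {perm Omega}}) (g : vertex -> vertex) : Prop :=
  is_aut g /\ forall v, local_in g v F.

Definition G_ (F : {set {perm Omega}}) (g : vertex -> vertex) : Prop :=
  is_aut g /\ exists X : seq vertex, forall v, v \notin X -> local_in g v F.

Definition G2_ (F F' : {set {perm Omega}}) (g : vertex -> vertex) : Prop :=
  G_ F g /\ U_ F' g.

Definition Fhat (F : {set {perm Omega}}) : {set {perm Omega}} :=
  [set p : {perm Omega} | [forall a, p a \in orbit 'P F a]].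

(** closure in Aut(T_d) for the permutation topology: g is an automorphism
    and every basic neighbourhood g.Stab(X) (X finite) meets S, i.e. some
    h in S agrees with g on X. *)
Definition aut_closure (S : (vertex -> vertex) -> Prop) (g : vertex -> vertex) : Prop :=
  is_aut g /\ forall X : seq vertex, exists2 h, S h & forall x, x \in X -> h x = g x.

Definition aut_dense (S : (vertex -> vertex) -> Prop) : Prop :=
  forall g, is_aut g -> aut_closure S g.

End Tree.

(* Main.v *)
Require Import Defs.
From HB Require Import structures.
From mathcomp Require Import all_boot all_order all_fingroup.
Set Implicit Arguments. Unset Strict Implicit. Unset Printing Implicit Defensive.

Section Basic.
Variable Omega : finType.
Notation V := (vertex Omega).

Definition root : V := exist _ [::] isT.

Lemma reduced_rcons (s : seq Omega) a : reduced (rcons s a) -> reduced s.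
Proof. by case: s => //= x t; rewrite rcons_path => /andP[]. Qed.

Lemma nbr_seq_rcons (s : seq Omega) a : nbr_seq (rcons s a) a = s.
Proof.
case: s => [|x t] /=; first by rewrite eqxx.
by rewrite last_rcons eqxx belast_rcons.
Qed.

Lemma nbr_seq_red (t : seq Omega) a : reduced (rcons t a) -> nbr_seq t a = rcons t a.
Proof.
case: t => [|x t] //=; rewrite rcons_path => /andP[_ H].
by rewrite (negbTE H).
Qed.

Lemma nbr_cases (w : V) a :
  val (nbr w a) = rcons (val w) a \/ val w = rcons (val (nbr w a)) a.
Proof.
case: w => [[|x s] Hs] /=; first by left.
case: eqP => Hl; last by left.
by right; rewrite -Hl -lastI.
Qed.

Lemma nbr_inv (w : V) a : nbr (nbr w a) a = w.
Proof.
apply: val_inj; case: (nbr_cases w a) => H.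
- by change (nbr_seq (val (nbr w a)) a = val w); rewrite H nbr_seq_rcons.
- change (nbr_seq (val (nbr w a)) a = val w).
  by rewrite nbr_seq_red -H //; exact: valP.
Qed.

Lemma nbr_inj (w : V) a b : nbr w a = nbr w b -> a = b.
Proof.
move=> E; have E' := congr1 val E.
case: (nbr_cases w a) => Ha; case: (nbr_cases w b) => Hb.
- by move: E'; rewrite Ha Hb => /rcons_inj [].
- have := congr1 size Hb; rewrite -E' Ha !size_rcons => /eqP.
  by rewrite -addn2 -{1}(addn0 (size _)) eqn_add2l.
- have := congr1 size Ha; rewrite E' Hb !size_rcons => /eqP.
  by rewrite -addn2 -{1}(addn0 (size _)) eqn_add2l.
- by move: Ha; rewrite Hb E' => /rcons_inj [].
Qed.

Definition walk (v : V) (z : seq Omega) := foldl (@nbr Omega) v z.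

Lemma walk_root_seq (s : seq Omega) (Hs : reduced s) : val (walk root s) = s.
Proof.
elim/last_ind: s Hs => [|s a IH] Hs //.
rewrite /walk foldl_rcons /= -/(walk root s) IH; last exact: reduced_rcons Hs.
exact: nbr_seq_red.
Qed.

Lemma walk_root (x : V) : walk root (val x) = x.
Proof. by apply: val_inj; rewrite walk_root_seq //; exact: valP. Qed.

Lemma walk_rev (w : V) s : walk (walk w s) (rev s) = w.
Proof.
elim: s w => [|a s IH] w //=.
by rewrite rev_cons /walk foldl_rcons -/(walk _ _) IH nbr_inv.
Qed.

Definition Lm (y x : V) := walk y (val x).

Lemma Lm_nbr y x a : Lm y (nbr x a) = nbr (Lm y x) a.
Proof.
rewrite /Lm; case: (nbr_cases x a) => H.
- by rewrite H /walk foldl_rcons.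
- by rewrite [in RHS]H /walk foldl_rcons nbr_inv.
Qed.

Lemma walk_Lm y x z : walk (Lm y x) z = Lm y (walk x z).
Proof. by elim: z x => [|a z IH] x //=; rewrite -IH Lm_nbr. Qed.

Lemma walk_closed v z : reduced z -> walk v z = v -> z = [::].
Proof.
move=> Hz E.
set zv := walk root z.
have Hzv : val zv = z by exact: walk_root_seq.
set u := walk root (rev (val v)).
have Huv : Lm u v = root.
  by rewrite /Lm /u -{2}(revK (val v)) walk_rev.
have E2 : Lm v zv = v by rewrite /zv -walk_Lm.
have : Lm u (walk v (val zv)) = zv by rewrite -walk_Lm Huv walk_root.
rewrite -/(Lm v zv) E2 Huv => Hr.
by rewrite -Hzv -Hr.
Qed.

Lemma path_ex (u w : V) : exists z, reduced z /\ walk u z = w.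
Proof.
set u' := walk root (rev (val u)).
exists (val (Lm u' w)); split; first exact: valP.
change (Lm u (walk u' (val w)) = w); rewrite -walk_Lm.
have -> : Lm u u' = root.
  by rewrite /u' -walk_Lm /Lm /= -{1}(walk_root u) walk_rev.
exact: walk_root.
Qed.
End Basic.
Arguments root {Omega}.

Section Aut.
Variable Omega : finType.
Notation V := (vertex Omega).
Variable tau : V -> {perm Omega}.

Fixpoint himg (u : V) (z : seq Omega) : seq Omega :=
  if z is a :: z' then tau u a :: himg (nbr u a) z' else [::].

Lemma size_himg u z : size (himg u z) = size z.
Proof. by elim: z u => [|a z IH] u //=; rewrite IH. Qed.

Lemma himg_rcons u s a : himg u (rcons s a) = rcons (himg u s) (tau (walk u s) a).
Proof. by elim: s u => [|b s IH] u //=; rewrite IH. Qed.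

Variable h : V -> V.
Hypothesis H : forall w a, h (nbr w a) = nbr (h w) (tau w a).

Lemma tau_compat w a : tau (nbr w a) a = tau w a.
Proof.
apply: (@nbr_inj _ (h (nbr w a))).
by rewrite -H nbr_inv H nbr_inv.
Qed.

Lemma h_walk u z : h (walk u z) = walk (h u) (himg u z).
Proof. by elim: z u => [|a z IH] u //=; rewrite IH H. Qed.

Lemma himg_path u a z : path (fun x y => x != y) a z ->
  path (fun x y => x != y) (tau u a) (himg (nbr u a) z).
Proof.
elim: z u a => [|b z IH] u a //= /andP[ab pz].
rewrite IH // andbT -(tau_compat u a) (inj_eq (@perm_inj _ _)).
by [].
Qed.

Lemma himg_reduced u z : reduced z -> reduced (himg u z).
Proof. by case: z => [|a z] //=; exact: himg_path. Qed.

Lemma h_inj : injective h.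
Proof.
move=> x y E.
have [z [Hz Ez]] := path_ex x y.
have := h_walk x z; rewrite Ez -E => /esym /(walk_closed (himg_reduced x Hz)).
move=> /(congr1 size); rewrite size_himg => /size0nil Z.
by rewrite -Ez Z.
Qed.

Lemma h_surj_walk z x : exists x', h x' == walk (h x) z.
Proof.
elim: z x => [|a z IH] x /=; first by exists x.
have -> : nbr (h x) a = h (nbr x ((tau x)^-1 a))%g by rewrite H permKV.
exact: IH.
Qed.

Lemma h_surj y : exists x, h x == y.
Proof.
have [z [_ Ez]] := path_ex (h root) y.
by rewrite -Ez; exact: h_surj_walk.
Qed.

Lemma h_aut : is_aut h.
Proof.
split.
  exists (fun y => xchoose (h_surj y)).
    by move=> x; apply: h_inj; exact/eqP/(xchooseP (h_surj (h x))).
  by move=> y; exact/eqP/(xchooseP (h_surj y)).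
move=> u w; split.
  by move=> [a ->]; exists (tau u a); rewrite H.
move=> [b E]; exists ((tau u)^-1 b)%g; apply: h_inj.
by rewrite E H permKV.
Qed.
End Aut.

Section Construct.
Variable Omega : finType.
Notation V := (vertex Omega).
Variable tau : V -> {perm Omega}.
Hypothesis Hc : forall w a, tau (nbr w a) a = tau w a.
Variable r : V.

Definition hc (w : V) : V := walk r (himg tau root (val w)).

Lemma hc_root : hc root = r.
Proof. by []. Qed.

Lemma hc_nbr w a : hc (nbr w a) = nbr (hc w) (tau w a).
Proof.
rewrite /hc; case: (nbr_cases w a) => E.
- by rewrite E himg_rcons /walk foldl_rcons -/(walk root (val w)) walk_root.
- rewrite [in RHS]E himg_rcons /walk foldl_rcons -/(walk _ _).
  by rewrite -/(walk root (val (nbr w a))) walk_root Hc nbr_inv.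
Qed.
End Construct.

Section Loc.
Variable Omega : finType.
Notation V := (vertex Omega).
Variable g : V -> V.

Definition locp (v : V) : {perm Omega} :=
  odflt 1%g [pick p : {perm Omega} | [forall a, g (nbr v a) == nbr (g v) (p a)]].

Lemma loc_unique v (p q : {perm Omega}) :
  (forall a, g (nbr v a) = nbr (g v) (p a)) ->
  (forall a, g (nbr v a) = nbr (g v) (q a)) -> p = q.
Proof.
move=> Hp Hq; apply/permP => a; apply: (@nbr_inj _ (g v)).
by rewrite -Hp -Hq.
Qed.

Hypothesis Ag : is_aut g.

Lemma locp_spec v a : g (nbr v a) = nbr (g v) (locp v a).
Proof.
have [[gi gK _] Hadj] := Ag.
pose f c := odflt c [pick b | g (nbr v c) == nbr (g v) b].
have Hf c : g (nbr v c) = nbr (g v) (f c).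
  rewrite /f; case: (pickP (fun b => g (nbr v c) == nbr (g v) b)) => [b /eqP -> //|Hn].
  have [b Eb] : adj (g v) (g (nbr v c)) by apply: (Hadj v (nbr v c)).1; exists c.
  by move: (Hn b); rewrite Eb eqxx.
have finj : injective f.
  move=> c d E; apply: (@nbr_inj _ v); apply: (can_inj gK).
  by rewrite !Hf E.
rewrite /locp; case: pickP => [p /forallP Hp|Hn]; first exact/eqP.
move: (Hn (perm finj)) => /negbT /forallPn [b].
by rewrite permE Hf eqxx.
Qed.

Lemma local_inE v (S : {set {perm Omega}}) : local_in g v S <-> locp v \in S.
Proof.
split; last by move=> Hs; exists (locp v) => //; exact: locp_spec.
move=> [p Hp Ep]; suff -> : locp v = p by [].
apply: loc_unique => //; exact: locp_spec.
Qed.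
End Loc.

Section Count.
Variable Omega : finType.
Variable F : {group {perm Omega}}.

Lemma orbit_count (s : {perm Omega}) c :
  s c \notin orbit 'P F c -> exists2 c', c' != c & s c' \notin orbit 'P F c'.
Proof.
move=> Hc.
case: (boolP [exists c', (c' != c) && (s c' \notin orbit 'P F c')]).
  by move=> /existsP [c' /andP [H1 H2]]; exists c'.
move=> Hn; exfalso.
have Hall c' : c' != c -> s c' \in orbit 'P F c'.
  move=> H; apply: contraNT Hn => H'; apply/existsP; exists c'; by rewrite H H'.
set O := orbit 'P F c.
have sub : (s @: ~: O) \subset ~: O.
  apply/subsetP => y /imsetP [x]; rewrite !inE => Hx ->.
  have xc : x != c by apply: contraNneq Hx => ->; exact: orbit_refl.
  have Hsx := Hall x xc.
  apply: contra Hx => HsO.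
  rewrite orbit_sym in Hsx.
  exact: orbit_trans Hsx HsO.
have Eq : (s @: ~: O) = ~: O.
  by apply/eqP; rewrite eqEcard sub card_imset //=; exact: perm_inj.
have : s c \in (s @: ~: O) by rewrite Eq inE.
move=> /imsetP [x Hx /perm_inj E]; move: Hx; rewrite -E inE.
by rewrite orbit_refl.
Qed.

Lemma reduced_rcons2 (t : seq Omega) e e' :
  reduced (rcons t e) -> e' != e -> reduced (rcons (rcons t e) e').
Proof.
case: t => [|x t] /=; first by rewrite andbT eq_sym.
rewrite !rcons_path last_rcons => -> /=; by rewrite eq_sym.
Qed.

Variable tau : vertex Omega -> {perm Omega}.
Variable h : vertex Omega -> vertex Omega.
Hypothesis H : forall w a, h (nbr w a) = nbr (h w) (tau w a).
Variable Y : seq (vertex Omega).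
Hypothesis hY : forall v, v \notin Y -> tau v \in F.

Lemma tau_orbit v c : tau v c \in orbit 'P F c.
Proof.
apply/negPn/negP => Hb.
pose bad x e := tau x e \notin orbit 'P F e.
have bad_in x e : bad x e -> x \in Y.
  move=> Hx; apply: contraT => Hn; have Hf := hY Hn.
  by move: Hx; rewrite /bad (mem_orbit 'P e Hf).
pose Inv z := reduced z /\ forall i, i < size z -> bad (walk v (take i z)) (nth c z i).
have ext n : exists z, size z = n.+1 /\ Inv z.
  elim: n => [|n [z [Sz [Rz Bz]]]].
    by exists [:: c]; split=> //; split=> // [[|i]].
  move: Sz Rz Bz; case/lastP: z => [|t e] //; rewrite size_rcons => Sz Rz Bz.
  have B1 : bad (walk v t) e.
    have := Bz (size t); rewrite ltnSn nth_rcons ltnn eqxx.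
    by rewrite -cats1 take_size_cat //; apply.
  have B2 : bad (walk v (rcons t e)) e.
    by rewrite /walk foldl_rcons -/(walk _ _) /bad (tau_compat H).
  have [e' He' B3] := orbit_count B2.
  exists (rcons (rcons t e) e'); split; first by rewrite !size_rcons -Sz.
  split; first exact: reduced_rcons2.
  move=> i; rewrite size_rcons ltnS leq_eqVlt => /orP [/eqP ->|Hi].
    by rewrite nth_rcons ltnn eqxx -[rcons (rcons t e) e']cats1 take_size_cat.
  rewrite nth_rcons Hi -[rcons (rcons t e) e']cats1 takel_cat ?(ltnW Hi) //.
  by apply: Bz; rewrite -(size_rcons t e).
have [z [Sz [Rz Bz]]] := ext (size Y).
pose f i := walk v (take i z).
have finj : {in iota 0 (size z) &, injective f}.
  have key i j : i < j -> j < size z -> f i = f j -> False.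
    move=> ij jz E.
    have Ej : take j z = take i z ++ drop i (take j z).
      by rewrite -{1}(cat_take_drop i (take j z)) take_takel // ltnW.
    have Rs : reduced (drop i (take j z)) by apply: drop_sorted; apply: take_sorted.
    have : walk (f i) (drop i (take j z)) = f i.
      by rewrite /walk -foldl_cat -Ej -/(walk _ _) -/(f j) E.
    move=> /(walk_closed Rs) /(congr1 size).
    rewrite size_drop size_takel ?(ltnW jz) //= => /eqP.
    by rewrite subn_eq0 leqNgt ij.
  move=> i j; rewrite !mem_iota /= !add0n => Hi Hj E.
  case: (ltngtP i j) => [ij|ji|//].
    by case: (key i j ij Hj E).
  by case: (key j i ji Hi (esym E)).
have U : uniq [seq f i | i <- iota 0 (size z)] by rewrite map_inj_in_uniq // iota_uniq.
have Sub : {subset [seq f i | i <- iota 0 (size z)] <= Y}.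
  move=> x /mapP [i]; rewrite mem_iota add0n /= => Hi ->.
  by apply: (bad_in _ (nth c z i)); apply: Bz.
have := uniq_leq_size U Sub.
by rewrite size_map size_iota Sz ltnn.
Qed.
End Count.

Section Approx.
Variable Omega : finType.
Notation V := (vertex Omega).

Fixpoint words (n : nat) : seq (seq Omega) :=
  if n is n'.+1 then [::] :: [seq a :: s | a <- enum Omega, s <- words n']
  else [:: [::]].

Lemma words_mem n s : size s <= n -> s \in words n.
Proof.
elim: n s => [|n IH] [|a s] //= Hs; rewrite ?inE ?eqxx //.
apply/orP; right; apply: allpairs_f; first by rewrite mem_enum.
exact: IH.
Qed.

Variable F : {group {perm Omega}}.
Variable F' : {set {perm Omega}}.
Hypothesis hFF' : F \subset F'.
Hypothesis hF' : F' \subset Fhat F.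

Lemma approx g : U_ F' g -> aut_closure (G2_ F F') g.
Proof.
move=> [Ag Lg]; split=> // X.
pose tg := locp g.
have Hg : forall v a, g (nbr v a) = nbr (g v) (tg v a) := locp_spec Ag.
have Cg := tau_compat Hg.
have tgF' v : tg v \in F' by apply/(local_inE Ag).
pose R := \max_(x <- X) size (val x).
pose pre (w : V) : V := exist _ (take R.+1 (val w)) (take_sorted _ (valP w)).
pose psi (u : V) : {perm Omega} :=
  odflt 1%g [pick f in F | [forall a, (last a (val u) == a) ==> (f a == tg u a)]].
have psiF u : psi u \in F.
  by rewrite /psi; case: pickP => [f /andP []|] //= _; exact: group1.
have psi_spec u t a : val u = rcons t a -> psi u a = tg u a.
  move=> E.
  have : tg u \in Fhat F by apply: (subsetP hF'); exact: tgF'.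
  rewrite inE => /forallP /(_ a) /orbitP [f fF Ef].
  rewrite /psi; case: pickP => [f' /andP [_ /forallP /(_ a)]|Hn].
    by rewrite E last_rcons eqxx /= => /eqP.
  move: (Hn f); rewrite fF /=; move/negbT/negP; case.
  apply/forallP => b; rewrite E last_rcons; apply/implyP => /eqP <-.
  by rewrite -Ef.
pose tau (w : V) := if size (val w) <= R then tg w else psi (pre w).
have claim p q a : val q = rcons (val p) a -> tg p a = tg q a -> tau p a = tau q a.
  move=> E Et; rewrite /tau E size_rcons.
  case: (ltngtP (size (val p)) R) => Hn.
  - exact: Et.
  - suff -> : pre p = pre q by [].
    by apply: val_inj; rewrite /= E -cats1 takel_cat.
  - have -> : pre q = q.
      by apply: val_inj; rewrite /= take_oversize // E size_rcons Hn.
    by rewrite Et (psi_spec q _ a E).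
have Hc w a : tau (nbr w a) a = tau w a.
  case: (nbr_cases w a) => E.
  - by symmetry; apply: claim E _; rewrite Cg.
  - by apply: claim E _; rewrite Cg.
pose h := hc tau (g root).
have H : forall w a, h (nbr w a) = nbr (h w) (tau w a) := hc_nbr Hc (g root).
have Ah := h_aut H.
have agree w : size (val w) <= R -> h w = g w.
  case: w => s Hs; elim/last_ind: s Hs => [|s a IH] Hs /= Hsz.
    by have -> : exist _ [::] Hs = root by apply: val_inj.
  have Hs' := reduced_rcons Hs.
  have Ew : exist _ (rcons s a) Hs = nbr (exist _ s Hs') a.
    by apply: val_inj; rewrite /= nbr_seq_red.
  have Hsz' : size s <= R by rewrite size_rcons in Hsz; exact: ltnW.
  rewrite Ew H Hg IH //.
  by rewrite /tau /= Hsz'.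
exists h.
  split; last first.
    split=> // v; exists (tau v) => //.
    rewrite /tau; case: ifP => _; first exact: tgF'.
    exact: (subsetP hFF').
  split=> //; exists (pmap insub (words R)) => v Hv.
  exists (tau v) => //.
  have Hn : ~~ (size (val v) <= R).
    by apply: contra Hv => Hl; rewrite mem_pmap_sub words_mem.
  by rewrite /tau (negbTE Hn).
move=> x Hx; apply: agree.
exact: (leq_bigmax_seq _ Hx isT).
Qed.
End Approx.

Theorem mainTheorem14 (Omega : finType) (hd : 3 <= #|Omega|)
    (F F' : {group {perm Omega}})
    (hFF' : F \subset F') (hF'hat : F' \subset Fhat F) :
  (forall g : vertex Omega -> vertex Omega,
      aut_closure (G2_ F F') g <-> U_ F' g)
  /\ (aut_dense (G_ F) <-> [transitive F, on [set: Omega] | 'P]).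
Proof.
split.
  move=> g; split; last exact: approx.
  move=> [Ag Hcl]; split=> // v.
  have [h [_ [_ Hh]] hx] := Hcl (v :: [seq nbr v a | a <- enum Omega]).
  have [p Hp Ep] := Hh v.
  exists p => // a.
  rewrite -hx; last by rewrite inE map_f ?orbT // mem_enum.
  by rewrite -hx ?mem_head // Ep.
have FsubFhat : (F : {set _}) \subset Fhat F.
  apply/subsetP => p Hp; rewrite inE; apply/forallP => a.
  exact: (mem_orbit 'P a Hp).
split.
  move=> Hd.
  have Hall a b : b \in orbit 'P F a.
    apply/negPn/negP => Hb.
    pose tau := fun _ : vertex Omega => tperm a b.
    have Hc : forall w c, tau (nbr w c) c = tau w c by [].
    pose g := hc tau root.
    have Hg : forall w c, g (nbr w c) = nbr (g w) (tau w c) := hc_nbr Hc root.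
    have [_ Hcl] := Hd g (h_aut Hg).
    have [h [Ah [Y HY]] hx] := Hcl [:: root; nbr root a].
    have Hh := locp_spec Ah.
    have hY : forall v, v \notin Y -> locp h v \in F.
      by move=> v Hv; apply/(local_inE Ah); exact: HY.
    have := tau_orbit Hh hY root a.
    suff -> : locp h root a = b by rewrite (negbTE Hb).
    apply: (@nbr_inj _ (h root)).
    rewrite -Hh hx ?inE ?eqxx ?orbT // Hg hx ?mem_head //.
    by rewrite /tau tpermL.
  have [a0 _] : exists a0 : Omega, a0 \in [set: Omega].
    by apply/card_gt0P; rewrite cardsT; apply: leq_trans hd.
  apply/imsetP; exists a0 => //.
  by apply/setP => x; rewrite inE Hall.
move=> Ht g Ag.
have Ug : U_ (Fhat F) g.
  split=> // v; apply/(local_inE Ag); rewrite inE; apply/forallP => a.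
  by rewrite (atransP Ht) ?inE.
have [_ Hcl] := approx FsubFhat (subxx _) Ug.
split=> // X; have [h [Gh _] hx] := Hcl X; by exists h.
Qed.
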